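(* For each integer $n\ge0$ let \[ \theta^\Delta_n(x)=\sum_{k=0}^n\frac{(n+k)!}{2^k(n-k)!\,k!}\,(x)_{n-k}, \] where $(x)_j=x(x-1)\cdots(x-j+1)$ and $(x)_0=1$. Then for every integer $n\ge0$ and every $x\in\mathbb{C}$, \[ (x-2n)\,\theta^\Delta_n(x+1)-4(x-n)\,\theta^\Delta_n(x)+3x\,\theta^\Delta_n(x-1)=0 . \]
   Context: $\theta^\Delta_n$ is called the difference reverse Bessel polynomial of degree $n$. *)

(* Defs.v *)
From HB Require Import structures.
From mathcomp Require Import all_boot all_order all_algebra.
From mathcomp Require Import complex.
From mathcomp Require Import reals.
Set Implicit Arguments. Unset Strict Implicit. Unset Printing Implicit Defensive.
Import Order.TTheory GRing.Theory Num.Theory.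
Local Open Scope ring_scope.

Definition falling {F : pzRingType} (x : F) (j : nat) : F :=
  \prod_(i < j) (x - i%:R).

Definition theta_delta {F : fieldType} (n : nat) (x : F) : F :=
  \sum_(k < n.+1)
    ((n + k)`!%:R / (2 ^ k * (n - k)`! * k`!)%:R) * falling x (n - k).

(* Main.v *)
Require Import Defs.
From HB Require Import structures.
From mathcomp Require Import all_boot all_order all_algebra.
From mathcomp Require Import complex.
From mathcomp Require Import reals ring zify.
Import GRing.Theory Num.Theory.
Local Open Scope ring_scope.
Local Open Scope complex_scope.

Definition cc (F : fieldType) (n k : nat) : F :=
  ((n + k)`!%:R / (2 ^ k * (n - k)`! * k`!)%:R).

Lemma fall_recl (F : comPzRingType) (y : F) j :
  falling y j.+1 = y * falling (y - 1) j.
Proof.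
rewrite /falling big_ord_recl subr0; congr (_ * _).
apply: eq_bigr => i _; rewrite lift0 -addn1 natrD; ring.
Qed.

Lemma fall_recr (F : comPzRingType) (y : F) j :
  falling y j.+1 = falling y j * (y - j%:R).
Proof. by rewrite /falling big_ord_recr. Qed.

Lemma coef_rec (F : numFieldType) k j :
  2 * (k.+1)%:R * cc F (k + j.+1) k.+1 =
  (j.+1)%:R * ((k + j.+1) + k).+1%:R * cc F (k + j.+1) k.
Proof.
rewrite /cc.
have -> : (k + j.+1 - k.+1 = j)%N by lia.
have -> : (k + j.+1 - k = j.+1)%N by lia.
rewrite addnS !factS expnS !natrM.
field.
by rewrite !(addrC 1) !natr1 !pnatr_eq0 -!lt0n !fact_gt0 expn_gt0.
Qed.

Lemma term_lemma (F : numFieldType) (x : F) k j :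
  let n := (k + j.+1)%N in
  cc F n k * ((x - (2 * n)%:R) * falling (x + 1) (n - k)
     - 4 * (x - n%:R) * falling x (n - k)
     + 3 * (x * falling (x - 1) (n - k)))
  = 2 * k%:R * cc F n k * falling x (n - k)
    - 2 * (k.+1)%:R * cc F n k.+1 * falling x (n - k.+1).
Proof.
move=> n; rewrite /n.
have -> : (k + j.+1 - k.+1 = j)%N by lia.
have -> : (k + j.+1 - k = j.+1)%N by lia.
rewrite coef_rec -fall_recl (@fall_recl _ (x+1) j) addrK !fall_recr.
ring.
Qed.

Theorem mainTheorem11 (R : realType) (n : nat) (x : R[i]) :
  (x - (2 * n)%:R) * theta_delta n (x + 1)
  - 4%:R * (x - n%:R) * theta_delta n x
  + 3%:R * x * theta_delta n (x - 1) = 0.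
Proof.
have thE : forall y : R[i], theta_delta n y =
    \sum_(k < n.+1) cc _ n k * falling y (n - k) by [].
pose v (k : nat) : R[i] :=
  if (k <= n)%N then 2 * k%:R * cc _ n k * falling x (n - k) else 0.
rewrite !thE !mulr_sumr -sumrB -big_split /=.
transitivity (\sum_(k < n.+1) (v k - v k.+1)).
  apply: eq_bigr => -[k hk] _ /=.
  rewrite /v.
  have [->|hlt] : k = n \/ (k < n)%N by lia.
    rewrite leqnn ltnn subnn /falling !big_ord0; ring.
  rewrite (ltnW hlt) hlt.
  have [j hj] : exists j, n = (k + j.+1)%N by exists (n - k.+1)%N; lia.
  move: (@term_lemma _ x k j); rewrite -hj => <-.
  ring.
rewrite -[LHS]opprK -sumrN.
under eq_bigr do rewrite opprB.
rewrite -(big_mkord xpredT (fun k => v k.+1 - v k)) telescope_sumr //.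
by rewrite /v ltnn leq0n mulr0 !mul0r subrr oppr0.
Qed.
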